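(* Let $\mathcal A$ be an infinite simple group, $X$ a finite generating system, $\mathcal K$ a proper non-trivial subgroup and $\Gamma=\mathrm{Sch}(\mathcal A,\mathcal K,X)$. Then the group $\mathrm{Aut}_X(\Gamma)$ of label-preserving automorphisms has infinitely many orbits on vertices. Moreover, if $\mathcal K$ is cyclic of prime order, then $\mathrm{Aut}(\Gamma)$ has infinitely many orbits on vertices, and therefore $\Gamma$ is not almost transitive.
   Context: The Schreier graph $\mathrm{Sch}(\mathcal A,\mathcal K,X)$ has vertices the right cosets $\mathcal Kg$ and, for each coset and each $x$ with $x\in X$ or $x^{-1}\in X$, an edge labeled $x$ from $\mathcal Kg$ to $\mathcal Kgx$ whose inverse is the edge labeled $x^{-1}$ from $\mathcal Kgx$. $\mathrm{Aut}(\Gamma)$ is the group of all graph automorphisms (ignoring labels). A graph is almost transitive if there is a finite set $V_0$ of vertices such that every vertex can be mapped into $V_0$ by an automorphism. *)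

(* Defs.v *)
From Stdlib Require Import ClassicalEpsilon List.
From mathcomp Require Import all_boot.
Set Implicit Arguments. Unset Strict Implicit. Unset Printing Implicit Defensive.

Record Grp := {
  gcar :> Type;
  gmul : gcar -> gcar -> gcar;
  gone : gcar;
  ginv : gcar -> gcar;
  gmulA : forall a b c, gmul a (gmul b c) = gmul (gmul a b) c;
  gmul1 : forall a, gmul gone a = a;
  gmulV : forall a, gmul (ginv a) a = gone }.

Section GroupNotions.
Variable A : Grp.

Fixpoint gpow (a : A) (k : nat) : A :=
  match k with 0 => gone A | k'.+1 => gmul a (gpow a k') end.

Definition subgroup (H : A -> Prop) : Prop :=
  H (gone A) /\ (forall a b, H a -> H b -> H (gmul a b)) /\
  (forall a, H a -> H (ginv a)).

Definition normal_subgroup (N : A -> Prop) : Prop :=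
  subgroup N /\ forall g k, N k -> N (gmul (ginv g) (gmul k g)).

Definition simple_group : Prop :=
  (exists a : A, a <> gone A) /\
  forall N, normal_subgroup N -> (forall a, N a -> a = gone A) \/ (forall a, N a).

Definition infinite_group : Prop := ~ exists l : list A, forall a, In a l.

Definition generates n (x : 'I_n -> A) : Prop :=
  forall H, subgroup H -> (forall i, H (x i)) -> forall a, H a.

Definition proper_nontrivial (K : A -> Prop) : Prop :=
  (exists k, K k /\ k <> gone A) /\ (exists a, ~ K a).

Definition cyclic_prime_order (K : A -> Prop) : Prop :=
  exists (k : A) (p : nat), prime p /\ k <> gone A /\ gpow k p = gone A /\
    forall a, K a <-> exists i, a = gpow k i.

Definition rcoset (K : A -> Prop) (g : A) : A -> Prop :=
  fun y => K (gmul y (ginv g)).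

End GroupNotions.

Record sgraph := {
  Vtx : Type;
  Edg : Type;
  org : Edg -> Vtx;
  erev : Edg -> Edg }.

Definition is_aut (G : sgraph) (fV : Vtx G -> Vtx G) (fE : Edg G -> Edg G) : Prop :=
  bijective fV /\ bijective fE /\
  (forall e, org (fE e) = fV (org e)) /\
  (forall e, fE (erev e) = erev (fE e)).

Definition is_aut_lab (G : sgraph) (L : Type) (lab : Edg G -> L)
    (fV : Vtx G -> Vtx G) (fE : Edg G -> Edg G) : Prop :=
  is_aut fV fE /\ forall e, lab (fE e) = lab e.

Definition infinitely_many_orbits (G : sgraph)
    (P : (Vtx G -> Vtx G) -> (Edg G -> Edg G) -> Prop) : Prop :=
  ~ exists l : list (Vtx G),
      forall v, exists w fV fE, In w l /\ P fV fE /\ fV w = v.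

Definition almost_transitive (G : sgraph) : Prop :=
  exists V0 : list (Vtx G),
    forall v, exists fV fE, is_aut fV fE /\ In (fV v) V0.

Section Schreier.
Variables (A : Grp) (K : A -> Prop) (n : nat) (x : 'I_n -> A).

Definition sch_vertex := { S : A -> Prop | exists g, S = rcoset K g }.
Definition mkV (g : A) : sch_vertex := exist _ (rcoset K g) (ex_intro _ g erefl).
Definition vrep (v : sch_vertex) : A :=
  proj1_sig (constructive_indefinite_description _ (proj2_sig v)).

(* letters: (i, true) stands for x_i, (i, false) for x_i^-1 *)
Definition letter := ('I_n * bool)%type.
Definition letval (l : letter) : A :=
  if l.2 then x l.1 else ginv (x l.1).

(* edge (Kg, l) goes from Kg to Kg·l; its inverse is (Kg·l, l^-1) *)
Definition sch_edge := (sch_vertex * letter)%type.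
Definition sch_rev (e : sch_edge) : sch_edge :=
  (mkV (gmul (vrep e.1) (letval e.2)), (e.2.1, ~~ e.2.2)).

Definition Schreier : sgraph :=
  {| Vtx := sch_vertex; Edg := sch_edge; org := fst; erev := sch_rev |}.

Definition sch_label (e : Edg Schreier) : letter := snd e.
End Schreier.

(* Main.v *)
Require Import Defs.
From Stdlib Require Import ClassicalEpsilon ProofIrrelevance FunctionalExtensionality PropExtensionality List.
From mathcomp Require Import all_boot.
From mathcomp Require Import zify.
From Stdlib Require Import Lia.
Set Implicit Arguments. Unset Strict Implicit. Unset Printing Implicit Defensive.

Section G.
Variable A : Grp.
Local Notation "a ** b" := (gmul a b) (at level 40, left associativity).
Local Notation "1" := (gone A).
Local Notation "a ^-1" := (ginv a).

Lemma mulgV (a : A) : a ** a^-1 = 1.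
Proof.
have e1 : a ** a^-1 = (a^-1)^-1 ** a^-1 ** (a ** a^-1) by rewrite gmulV gmul1.
rewrite e1 -gmulA (gmulA (a^-1)) gmulV gmul1 gmulV //.
Qed.
Lemma mulg1 (a : A) : a ** 1 = a.
Proof. by rewrite -(gmulV a) gmulA mulgV gmul1. Qed.
Lemma mulgK (a b : A) : a ** b ** b^-1 = a.
Proof. by rewrite -gmulA mulgV mulg1. Qed.
Lemma mulgVK (a b : A) : a ** b^-1 ** b = a.
Proof. by rewrite -gmulA gmulV mulg1. Qed.
Lemma mulKg (a b : A) : a^-1 ** (a ** b) = b.
Proof. by rewrite gmulA gmulV gmul1. Qed.
Lemma mulVKg (a b : A) : a ** (a^-1 ** b) = b.
Proof. by rewrite gmulA mulgV gmul1. Qed.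
Lemma inv_uniq (a b : A) : a ** b = 1 -> a^-1 = b.
Proof. move=> h. by rewrite -[b](mulKg a) h mulg1. Qed.
Lemma invK (a : A) : (a^-1)^-1 = a.
Proof. apply: inv_uniq; exact: gmulV. Qed.
Lemma invM (a b : A) : (a ** b)^-1 = b^-1 ** a^-1.
Proof. apply: inv_uniq. by rewrite gmulA mulgK mulgV. Qed.
Lemma inv1 : (1 : A)^-1 = 1.
Proof. apply: inv_uniq; exact: gmul1. Qed.
Lemma mulg_cancel (a b c : A) : a ** c = b ** c -> a = b.
Proof. move=> h. by rewrite -[a](mulgK _ c) h mulgK. Qed.
Lemma inv_inj (a b : A) : a^-1 = b^-1 -> a = b.
Proof. by move=> h; rewrite -[a]invK h invK. Qed.

Definition gsimpl := (gmulA, mulgK, mulgVK, gmulV, mulgV, gmul1, mulg1, invM, invK, inv1).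

Lemma map_eq_in (T U : Type) (f g : T -> U) (l : list T) :
  List.map f l = List.map g l -> forall c, In c l -> f c = g c.
Proof.
elim: l => [//|a l IH] /= [e1 e2] c [<-|h]; [exact: e1 | exact: IH].
Qed.

Fixpoint allseqs (T : Type) (l : list T) (m : nat) : list (list T) :=
  match m with
  | 0 => nil :: nil
  | S m' => List.flat_map (fun c => List.map (cons c) (allseqs l m')) l
  end.

Lemma allseqsP (T : Type) (l s : list T) :
  (forall y, In y s -> In y l) -> In s (allseqs l (length s)).
Proof.
elim: s => [|a s IH] h /=; first by left.
apply/in_flat_map; exists a; split; first by apply: h; left.
apply/in_map; apply: IH => y hy; apply: h; by right.
Qed.

Variable K : A -> Prop.
Hypothesis sK : subgroup K.
Lemma K1 : K 1. Proof. by case: sK. Qed.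
Lemma KM a b : K a -> K b -> K (a ** b). Proof. case: sK => _ [h _]; exact: h. Qed.
Lemma KV a : K a -> K (a^-1). Proof. case: sK => _ [_ h]; exact: h. Qed.

Definition Nz (h : A) := forall k, K k -> K (h ** k ** h^-1) /\ K (h^-1 ** k ** h).

Lemma Nz1 : Nz 1.
Proof. move=> k hk; by rewrite inv1 gmul1 !mulg1. Qed.
Lemma NzM a b : Nz a -> Nz b -> Nz (a ** b).
Proof.
move=> ha hb k hk; rewrite invM; split.
- have := (ha _ (hb _ hk).1).1; by rewrite !gmulA.
- have := (hb _ (ha _ hk).2).2; by rewrite !gmulA.
Qed.
Lemma NzV a : Nz a -> Nz (a^-1).
Proof. move=> ha k hk; rewrite invK; split; [exact: (ha k hk).2 | exact: (ha k hk).1]. Qed.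
Lemma KNz a : K a -> Nz a.
Proof. move=> ha k hk; split; apply: KM; [apply: KM => // | apply: KV | apply: KM => //; apply: KV |]; done. Qed.

Definition core (a : A) := forall b, Nz (b ** a ** b^-1).

Lemma core_normal : normal_subgroup core.
Proof.
split; first split.
- move=> b; by rewrite mulg1 mulgV; exact: Nz1.
- split.
  + move=> a1 a2 h1 h2 b.
    have e : b ** (a1 ** a2) ** b^-1 = (b ** a1 ** b^-1) ** (b ** a2 ** b^-1).
      by rewrite !gmulA mulgVK.
    rewrite e; exact: NzM.
  + move=> a h b.
    have e : b ** a^-1 ** b^-1 = (b ** a ** b^-1)^-1 by rewrite !invM invK !gmulA.
    rewrite e; exact: NzV.
- move=> g k hk b.
  have e : b ** (g^-1 ** (k ** g)) ** b^-1 = (b ** g^-1) ** k ** (b ** g^-1)^-1.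
    by rewrite !invM invK !gmulA.
  rewrite e; exact: hk.
Qed.

Lemma finite_index_false (l : list A) :
  infinite_group A -> simple_group A -> proper_nontrivial K ->
  (forall a, exists c, In c l /\ Nz (a ** c^-1)) -> False.
Proof.
move=> hinf [_ hsimp] [[k0 [hk0 nk0]] [a0 na0]] hcov.
case: (hsimp _ core_normal) => [htriv | hall]; last first.
  have hN : forall a, Nz a by move=> a; have := hall a 1; rewrite gmul1 inv1 mulg1.
  have nK : normal_subgroup K.
    split => // g k hk; rewrite gmulA; exact: (hN g k hk).2.
  case: (hsimp _ nK) => [h|h]; [exact: nk0 (h _ hk0) | exact: na0 (h a0)].
pose i1 := inhabits (gone A).
pose pick a c := epsilon i1 (fun c' => In c' l /\ Nz (c ** a ** c'^-1)).
have pickP : forall a c, In (pick a c) l /\ Nz (c ** a ** (pick a c)^-1).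
  move=> a c; apply: (epsilon_spec i1 (fun c' => In c' l /\ Nz (c ** a ** c'^-1))).
  exact: hcov.
pose phi a := List.map (pick a) l.
have phi_inj : forall a a', phi a = phi a' -> a = a'.
  move=> a a' e.
  have hc : forall c, In c l -> Nz (c ** (a ** a'^-1) ** c^-1).
    move=> c hcl; have e' := map_eq_in e hcl.
    have := NzM (pickP a c).2 (NzV (pickP a' c).2).
    by rewrite e' !invM !invK !gmulA mulgVK.
  have hcore : core (a ** a'^-1).
    move=> b; have [c [hcl hb]] := hcov b.
    have e2 : b ** (a ** a'^-1) ** b^-1 =
      (b ** c^-1) ** (c ** (a ** a'^-1) ** c^-1) ** (b ** c^-1)^-1.
      by rewrite !invM !invK !gmulA ?mulgVK ?mulgK.
    rewrite e2; apply: NzM; [apply: NzM => //; exact: hc | exact: NzV].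
  have := htriv _ hcore => e3.
  apply: (mulg_cancel (c:=a'^-1)); by rewrite e3 mulgV.
apply: hinf.
exists (List.map (fun s => epsilon i1 (fun a => phi a = s)) (allseqs l (length l))).
move=> a; apply/in_map_iff; exists (phi a); split.
  apply: phi_inj; apply: (epsilon_spec i1 (fun a' => phi a' = phi a)); by exists a.
have -> : length l = length (phi a) by rewrite /phi List.length_map.
apply: allseqsP => y /in_map_iff [c [<- _]]; exact: (pickP a c).1.
Qed.

End G.

Definition dec (P : Prop) : bool := if excluded_middle_informative P then true else false.
Lemma decP (P : Prop) : reflect P (dec P).
Proof. rewrite /dec; case: excluded_middle_informative => h; by constructor. Qed.

Lemma sig_eq (T : Type) (P : T -> Prop) (u v : sig P) : proj1_sig u = proj1_sig v -> u = v.
Proof. case: u => a pa; case: v => b pb /= e; subst; f_equal; apply: proof_irrelevance. Qed.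

Lemma In_mem (T : eqType) (y : T) (s : seq T) : y \in s -> In y s.
Proof. elim: s => [//|a s IH]; rewrite in_cons => /orP [/eqP ->|h]; [by left | right; exact: IH]. Qed.

Section S.
Variables (A : Grp) (K : A -> Prop) (n : nat) (x : 'I_n -> A).
Hypothesis sK : subgroup K.
Local Notation "a ** b" := (gmul a b) (at level 40, left associativity).
Local Notation "1" := (gone A).
Local Notation "a ^-1" := (ginv a).
Local Notation V := (sch_vertex K).
Local Notation mkV := (mkV K).

Lemma mkV_eq (g g' : A) : K (g ** g'^-1) -> mkV g = mkV g'.
Proof.
move=> h; apply: sig_eq => /=; apply: functional_extensionality => y.
apply: propositional_extensionality; rewrite /rcoset; split => hy.
- have -> : y ** g'^-1 = y ** g^-1 ** (g ** g'^-1) by rewrite !gmulA mulgVK.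
  exact: KM.
- have -> : y ** g^-1 = y ** g'^-1 ** (g ** g'^-1)^-1 by rewrite invM invK !gmulA mulgVK.
  apply: KM => //; exact: KV.
Qed.

Lemma mkV_inj (g g' : A) : mkV g = mkV g' -> K (g ** g'^-1).
Proof.
move=> e; have e2 := f_equal (fun v => proj1_sig v g) e; simpl in e2.
rewrite /rcoset mulgV in e2; rewrite -e2; exact: K1.
Qed.

Lemma mkV_vrep (v : V) : mkV (vrep v) = v.
Proof.
apply: sig_eq => /=; rewrite /vrep.
by case: (constructive_indefinite_description _ _) => g /= ->.
Qed.

Lemma mkV_mulr (a b c : A) : mkV a = mkV b -> mkV (a ** c) = mkV (b ** c).
Proof. move=> /mkV_inj h; apply: mkV_eq; by rewrite invM !gmulA mulgK. Qed.

Definition target (v : V) (l : letter n) : V := mkV (vrep v ** letval x l).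

Lemma target_mkV g l : target (mkV g) l = mkV (g ** letval x l).
Proof. apply: mkV_mulr; exact: mkV_vrep. Qed.

Section Aut.
Variables (fV : V -> V) (fE : Edg (Schreier K x) -> Edg (Schreier K x)).
Hypothesis hA : is_aut (G:=Schreier K x) fV fE.

Lemma fE_pair v l : fE (v, l) = (fV v, snd (fE (v, l))).
Proof.
case: hA => _ [_ [horg _]]; rewrite [LHS]surjective_pairing; congr pair.
exact: (horg (v, l)).
Qed.

Lemma target_aut v l : target (fV v) (snd (fE (v, l))) = fV (target v l).
Proof.
case: hA => _ [_ [horg hrev]].
have e := horg (@erev (Schreier K x) (v, l)).
rewrite hrev fE_pair in e; simpl in e. by rewrite /target e.
Qed.
End Aut.

Lemma step_lab fV fE g l :
  is_aut_lab (@sch_label A K n x) fV fE ->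
  fV (mkV (g ** letval x l)) = mkV (vrep (fV (mkV g)) ** letval x l).
Proof.
move=> [hA hlab].
have e := target_aut hA (mkV g) l.
have hl : snd (fE (mkV g, l)) = l by exact: (hlab (mkV g, l)).
by rewrite hl target_mkV in e; rewrite -e.
Qed.

Lemma lab_aut_form fV fE :
  generates x -> is_aut_lab (@sch_label A K n x) fV fE ->
  exists h, Nz K h /\ forall g, fV (mkV g) = mkV (h ** g).
Proof.
move=> hgen hL.
set h := vrep (fV (mkV 1)).
have Pstep : forall a b l, fV (mkV a) = mkV b -> fV (mkV (a ** letval x l)) = mkV (b ** letval x l).
  move=> a b l e; rewrite (step_lab _ _ hL) e; apply: mkV_mulr; exact: mkV_vrep.
pose S s := forall a, fV (mkV a) = mkV (h ** a) <-> fV (mkV (a ** s)) = mkV (h ** a ** s).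
have hS : forall s, S s.
  apply: hgen; last first.
    move=> i a; split => e.
    - have := Pstep _ _ (i, true) e; by rewrite /letval /=.
    - have := Pstep _ _ (i, false) e; by rewrite /letval /= !mulgK.
  split; first by move=> a; rewrite !mulg1.
  split.
  - move=> s t hs ht a; rewrite /S in hs ht; rewrite !gmulA; split => e.
    + have := (ht (a ** s)).1; rewrite !gmulA; apply; exact: (hs a).1.
    + apply: (hs a).2; have := (ht (a ** s)).2; rewrite !gmulA; apply; exact: e.
  - move=> s hs a; rewrite /S in hs; have := hs (a ** s^-1); rewrite !gmulA !mulgVK => e; split => e'; [exact: e.2 e' | exact: e.1 e'].
have hform : forall g, fV (mkV g) = mkV (h ** g).
  move=> g; have := (hS g 1).1; rewrite gmul1 !mulg1; apply.
  by rewrite /h mkV_vrep.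
exists h; split => // k hk.
have inj : injective fV by case: hL => [[bV _] _]; exact: bij_inj.
split.
- have e : fV (mkV k) = fV (mkV 1) by congr fV; apply: mkV_eq; by rewrite inv1 mulg1.
  rewrite !hform mulg1 in e; have := mkV_inj e.
  by rewrite ?gmulA.
- have e : fV (mkV (h^-1 ** k ** h)) = fV (mkV 1).
    rewrite !hform mulg1 !gmulA mulgV gmul1; apply: mkV_eq; by rewrite mulgK.
  have := mkV_inj (inj _ _ e); by rewrite inv1 mulg1.
Qed.

Fixpoint evalw (w : seq (letter n)) : A :=
  match w with [::] => 1 | l :: w' => letval x l ** evalw w' end.
Fixpoint walk_end (v : V) (w : seq (letter n)) : V :=
  match w with [::] => v | l :: w' => walk_end (target v l) w' end.

Lemma walk_end_mkV g w : walk_end (mkV g) w = mkV (g ** evalw w).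
Proof.
elim: w g => [|l w IH] g /=; first by rewrite mulg1.
by rewrite target_mkV IH gmulA.
Qed.

Lemma evalw_cat w1 w2 : evalw (w1 ++ w2) = evalw w1 ** evalw w2.
Proof. elim: w1 => [|l w IH] /=; [by rewrite gmul1 | by rewrite IH gmulA]. Qed.

Fixpoint winv (w : seq (letter n)) : seq (letter n) :=
  match w with [::] => [::] | l :: w' => winv w' ++ [:: (l.1, ~~ l.2)] end.

Lemma evalw_inv w : evalw (winv w) = (evalw w)^-1.
Proof.
elim: w => [|[i b] w IH] /=; first by rewrite inv1.
rewrite evalw_cat IH /= mulg1 invM /letval /=; case: b => //=; by rewrite invK.
Qed.

Lemma words_all : generates x -> forall a, exists w, evalw w = a.
Proof.
move=> hgen; apply: hgen; last by move=> i; exists [:: (i, true)]; rewrite /= mulg1.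
split; first by exists [::].
split.
- move=> a b [w1 <-] [w2 <-]; exists (w1 ++ w2); exact: evalw_cat.
- move=> a [w <-]; exists (winv w); exact: evalw_inv.
Qed.

End S.

Section P.
Variables (A : Grp) (K : A -> Prop) (n : nat) (x : 'I_n -> A).
Hypothesis sK : subgroup K.
Local Notation "a ** b" := (gmul a b) (at level 40, left associativity).
Local Notation "1" := (gone A).
Local Notation "a ^-1" := (ginv a).
Local Notation V := (sch_vertex K).
Local Notation mkV := (mkV K).
Local Notation target := (@target A K n x).
Local Notation walk_end := (@walk_end A K n x).
Local Notation evalw := (@evalw A n x).

Lemma part1 : infinite_group A -> simple_group A -> generates x -> proper_nontrivial K ->
  infinitely_many_orbits (is_aut_lab (@sch_label A K n x)).
Proof.
move=> hinf hsimp hgen hpn [l hl].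
apply: (finite_index_false (l := List.map (@vrep A K) l) sK hinf hsimp hpn).
move=> a; have [w [fV [fE [hw [hL e]]]]] := hl (mkV a).
have [h [hN hf]] := lab_aut_form sK hgen hL.
exists (vrep w); split; first exact: in_map.
rewrite -(mkV_vrep w) hf in e; have hk := mkV_inj sK e.
have -> : a ** (vrep w)^-1 = (h ** vrep w ** a^-1)^-1 ** h.
  by rewrite !invM !invK !gmulA mulgVK.
apply: NzM => //; apply: KNz => //; exact: KV.
Qed.

Section Tr.
Variables (fV : V -> V) (fE : Edg (Schreier K x) -> Edg (Schreier K x)).
Hypothesis hA : is_aut (G:=Schreier K x) fV fE.

Fixpoint trans (v : V) (w : seq (letter n)) : seq (letter n) :=
  match w with [::] => [::] | l :: w' => snd (fE (v, l)) :: trans (target v l) w' end.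

Lemma size_trans v w : size (trans v w) = size w.
Proof. by elim: w v => [|l w IH] v //=; rewrite IH. Qed.

Lemma walk_end_trans v w : walk_end (fV v) (trans v w) = fV (walk_end v w).
Proof. elim: w v => [|l w IH] v //=; by rewrite (target_aut hA) IH. Qed.

Lemma trans_inj v w1 w2 : trans v w1 = trans v w2 -> w1 = w2.
Proof.
elim: w1 v w2 => [|l1 w1 IH] v [|l2 w2] //= [e1 e2].
have inj : injective fE by case: hA => _ [bE _]; exact: bij_inj.
have e : fE (v, l1) = fE (v, l2) by rewrite (fE_pair hA v l1) (fE_pair hA v l2) e1.
have [el] := inj _ _ e; subst l2.
by rewrite (IH _ _ e2).
Qed.

Definition ttrans (L : nat) (v : V) (t : L.-tuple (letter n)) : L.-tuple (letter n) :=
  @Tuple L _ (trans v t) (introT eqP (etrans (size_trans v t) (size_tuple t))).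

Definition Cl (v : V) (L : nat) := [set t : L.-tuple (letter n) | dec (walk_end v t = v)].

Lemma card_Cl v L : #|Cl v L| <= #|Cl (fV v) L|.
Proof.
have inj : injective (@ttrans L v).
  move=> t1 t2 /(f_equal val) /= /trans_inj e; exact: val_inj.
rewrite -(card_imset (Cl v L) inj); apply: subset_leq_card.
apply/subsetP => t' /imsetP [t ht ->]; rewrite inE; apply/decP.
move: ht; rewrite inE => /decP ht /=; by rewrite walk_end_trans ht.
Qed.
End Tr.

End P.

Lemma choose_list (T : Type) (P : T -> nat -> Prop) (l : list T) :
  (forall w, In w l -> exists L, P w L) ->
  exists Ls, forall w, In w l -> exists L, In L Ls /\ P w L.
Proof.
elim: l => [|a l IH] h; first by exists nil.
have [Ls hLs] := IH (fun w hw => h w (or_intror hw)).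
have [L0 h0] := h a (or_introl erefl).
exists (L0 :: Ls) => w [<-|hw]; first by exists L0; split => //; left.
have [L [h1 h2]] := hLs w hw; exists L; split => //; by right.
Qed.

Section Pow.
Variable A : Grp.
Local Notation "a ** b" := (gmul a b) (at level 40, left associativity).
Local Notation "1" := (gone A).
Local Notation "a ^-1" := (ginv a).

Lemma gpowD (a : A) m k : gpow a (m + k) = gpow a m ** gpow a k.
Proof. elim: m => [|m IH] /=; [by rewrite gmul1 | by rewrite IH gmulA]. Qed.
Lemma gpow1 k : gpow (gone A) k = 1.
Proof. elim: k => [|k IH] //=; by rewrite IH gmul1. Qed.
Lemma gpowM (a : A) m k : gpow a (m * k) = gpow (gpow a m) k.
Proof. elim: k => [|k IH] /=; [by rewrite muln0 | by rewrite mulnS gpowD IH]. Qed.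
Lemma gpow_conj (g b : A) i : g ** gpow b i ** g^-1 = gpow (g ** b ** g^-1) i.
Proof.
elim: i => [|i IH] /=; first by rewrite mulg1 mulgV.
by rewrite -IH !gmulA mulgVK.
Qed.
Lemma conj_inj (g a b : A) : g ** a ** g^-1 = g ** b ** g^-1 -> a = b.
Proof. move=> e; have := f_equal (fun y => g^-1 ** y ** g) e => /= h.
by rewrite !gmulA gmulV !gmul1 !mulgVK in h. Qed.
End Pow.

Lemma arith (p a j c : nat) : 1 < p -> 1 + a * j = c * p ->
  exists q, j * (a * (p - 1)) = q * p + 1.
Proof. move=> hp e; exists (a * j - c).
have hc : c <= a * j by nia.
nia. Qed.

Section P2.
Variables (A : Grp) (K : A -> Prop) (n : nat) (x : 'I_n -> A).
Hypothesis sK : subgroup K.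
Local Notation "a ** b" := (gmul a b) (at level 40, left associativity).
Local Notation "1" := (gone A).
Local Notation "a ^-1" := (ginv a).
Local Notation V := (sch_vertex K).
Local Notation mkV := (mkV K).
Local Notation walk_end := (@walk_end A K n x).
Local Notation evalw := (@evalw A n x).

Definition Pc (c b : A) := forall a, K (c ** a ** c^-1) <-> exists i, a = gpow b i.

Lemma conj_gen : cyclic_prime_order K -> forall g b,
  K (g ** b ** g^-1) -> b <> 1 -> Pc g b.
Proof.
move=> [k [p [pp [nk1 [hkp hK]]]]] g b hb nb.
have [j ej] := (hK _).1 hb.
have hp1 : (1 < p)%N by apply: prime_gt1.
have pj : ~~ (p %| j).
  apply/negP => /dvdnP [q eq]; apply: nb.
  have : g ** b ** g^-1 = 1 by rewrite ej eq mulnC gpowM hkp gpow1.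
  move=> e; apply: (@conj_inj _ g); by rewrite e mulg1 mulgV.
have [a _ ha] := Bezoutl j (ltnW hp1).
have : gcdn p j = 1%N.
  have cpj : coprime p j by rewrite prime_coprime.
  exact/eqP.
move=> g1; rewrite g1 in ha.
have [c ec] := dvdnP ha.
have [q eq] := arith hp1 ec.
pose e := a * (p - 1).
have hk : k = g ** gpow b e ** g^-1.
  rewrite gpow_conj ej -gpowM /e eq gpowD mulnC gpowM hkp gpow1 gmul1 /=.
  by rewrite mulg1.
move=> y; split.
- move=> /(hK _).1 [i ei]; exists (e * i); rewrite gpowM.
  apply: (@conj_inj _ g); rewrite ei hk !gpow_conj //.
- move=> [i ->]; apply/(hK _).2; exists (j * i).
  by rewrite gpowM -ej gpow_conj.
Qed.

Definition Tr L := [set t : L.-tuple (letter n) | dec (evalw t = 1)].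
Local Notation Cl := (@Cl A K n x).

Lemma Tr_sub v L : Tr L \subset Cl v L.
Proof.
apply/subsetP => t; rewrite !inE => /decP e; apply/decP.
rewrite -(mkV_vrep v) (walk_end_mkV x sK); congr Defs.mkV.
rewrite -[RHS]mulg1; congr gmul; exact: e.
Qed.

Lemma witness : generates x -> proper_nontrivial K -> forall w : V,
  exists L, exists t : L.-tuple (letter n), t \in Cl w L /\ t \notin Tr L.
Proof.
move=> hgen [[k0 [hk0 nk0]] _] w.
set c := vrep w.
have [t et] := words_all hgen (c^-1 ** k0 ** c).
exists (size t), (in_tuple t); rewrite !inE; split.
- apply/decP; rewrite -(mkV_vrep w) (walk_end_mkV x sK) /= et -/c.
  apply: mkV_eq => //; by rewrite !gmulA mulgV gmul1 mulgK.
- apply/negP => /decP /= e; rewrite et in e; apply: nk0.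
  have -> : k0 = c ** (c^-1 ** k0 ** c) ** c^-1 by rewrite !gmulA mulgV gmul1 mulgK.
  by rewrite e mulg1 mulgV.
Qed.

Lemma transfer fV fE w L (t : L.-tuple (letter n)) :
  is_aut (G:=Schreier K x) fV fE -> t \in Cl w L -> t \notin Tr L ->
  exists t' : L.-tuple (letter n), t' \in Cl (fV w) L /\ t' \notin Tr L.
Proof.
move=> hA ht hnt.
have pr : Tr L \proper Cl w L.
  rewrite properEneq Tr_sub andbT; apply/eqP => e; by rewrite e ht in hnt.
have lt := leq_trans (proper_card pr) (card_Cl hA w L).
case: (boolP (Cl (fV w) L \subset Tr L)) => [hs|/subsetPn [t' h1 h2]].
  by have := leq_trans lt (subset_leq_card hs); rewrite ltnn.
by exists t'.
Qed.

End P2.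

Lemma aut_inv (G : sgraph) (fV : Vtx G -> Vtx G) (fE : Edg G -> Edg G) :
  is_aut fV fE -> exists gV gE, is_aut gV gE /\ cancel fV gV.
Proof.
move=> [[gV c1 c2] [[gE d1 d2] [horg hrev]]].
exists gV, gE; split => //; split; first by exists fV.
split; first by exists fE.
split.
- move=> e; apply: (can_inj c1); by rewrite -horg d2 c2.
- move=> e; apply: (can_inj d1); by rewrite hrev !d2.
Qed.

Section Final.
Variables (A : Grp) (K : A -> Prop) (n : nat) (x : 'I_n -> A).
Hypothesis sK : subgroup K.
Local Notation "a ** b" := (gmul a b) (at level 40, left associativity).
Local Notation "1" := (gone A).
Local Notation "a ^-1" := (ginv a).
Local Notation V := (sch_vertex K).
Local Notation mkV := (mkV K).
Local Notation evalw := (@evalw A n x).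
Local Notation Cl := (@Cl A K n x).
Local Notation Tr := (@Tr A n x).

Lemma part2 : infinite_group A -> simple_group A -> generates x -> proper_nontrivial K ->
  cyclic_prime_order K -> infinitely_many_orbits (@is_aut (Schreier K x)).
Proof.
move=> hinf hsimp hgen hpn hcyc [l hl].
have [Ls hLs] := @choose_list V (fun w L => exists t : L.-tuple (letter n), t \in Cl w L /\ t \notin Tr L) l
  (fun w _ => @witness A K n x sK hgen hpn w).
pose B := List.flat_map (fun L => List.map (fun t : L.-tuple (letter n) => evalw t)
   (enum [set: L.-tuple (letter n)])) Ls.
pose i1 := inhabits (gone A).
pose cpick b := epsilon i1 (fun c => Pc K c b).
apply: (finite_index_false (l := List.map cpick B) sK hinf hsimp hpn).
move=> a; have [w [fV [fE [hw [hA e]]]]] := hl (mkV a).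
have [L [hL [t [ht hnt]]]] := hLs w hw.
have [t' [ht' hnt']] := @transfer A K n x sK fV fE w L t hA ht hnt.
rewrite e in ht'.
set b := evalw t'.
have hb : K (a ** b ** a^-1).
  move: ht'; rewrite inE => /decP; rewrite (walk_end_mkV x sK) => /(mkV_inj sK).
  by rewrite /b.
have nb : b <> 1.
  move=> eb; move/negP: hnt'; apply; rewrite inE; apply/decP; exact: eb.
have hPa := conj_gen hcyc hb nb.
have hB : In b B.
  apply/in_flat_map; exists L; split => //; apply: in_map; apply: In_mem.
  by rewrite mem_enum in_setT.
have hPc : Pc K (cpick b) b.
  exact: (epsilon_spec i1 (fun c => Pc K c b) (ex_intro _ a hPa)).
exists (cpick b); split; first exact: in_map.
set c := cpick b in hPc *.
move=> k hk; split.
- have h1 : K (c ** (c^-1 ** k ** c) ** c^-1) by rewrite !gmulA mulgV gmul1 mulgK.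
  have := (hPa _).2 ((hPc _).1 h1) => h.
  rewrite invM invK ?gmulA; rewrite ?gmulA in h; exact: h.
- have h1 : K (a ** (a^-1 ** k ** a) ** a^-1) by rewrite !gmulA mulgV gmul1 mulgK.
  have := (hPc _).2 ((hPa _).1 h1) => h.
  rewrite invM invK ?gmulA; rewrite ?gmulA in h; exact: h.
Qed.
End Final.

Theorem corollary6p7 (A : Grp) (n : nat) (x : 'I_n -> A) (K : A -> Prop) :
  infinite_group A -> simple_group A -> generates x ->
  subgroup K -> proper_nontrivial K ->
  infinitely_many_orbits (is_aut_lab (@sch_label A K n x)) /\
  (cyclic_prime_order K ->
     infinitely_many_orbits (@is_aut (Schreier K x)) /\
     ~ almost_transitive (Schreier K x)).
Proof.
move=> hinf hsimp hgen sK hpn.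
split; first exact: part1.
move=> hcyc.
have h2 := part2 sK hinf hsimp hgen hpn hcyc.
split => // -[V0 hV]; apply: h2; exists V0 => v.
have [fV [fE [hA hin]]] := hV v.
have [gV [gE [hB hc]]] := aut_inv hA.
exists (fV v), gV, gE; split => //; split => //; exact: hc.
Qed.
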